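(* Let $E(x)=2^{2^{2^x}}$. For any strictly increasing sequence of natural numbers $3\leq x_0<x_1<\dots<x_{E(x_0)+8}$ we have $\omega^3[x_0][x_1]\cdots[x_{E(x_0)+8}]>0$.
   Context: Ordinals are notations below $\varepsilon_0$, i.e. formal sums $\omega^{\alpha_0}+\dots+\omega^{\alpha_n}$ with non-increasing exponents (the empty sum is $0$), ordered lexicographically (Cantor normal form order). Write $1=\omega^0$, $\omega=\omega^1$, and $\omega^3=\omega^{1+1+1}$. Fundamental sequences, for $\alpha=\omega^{\alpha_0}+\dots+\omega^{\alpha_n}$ and $x\in\mathbb{N}$: $0[x]=0$. If $\alpha_n=0$ then $\alpha[x]=\omega^{\alpha_0}+\dots+\omega^{\alpha_{n-1}}$. If $\alpha_n=\beta+1$ then $\alpha[x]=\omega^{\alpha_0}+\dots+\omega^{\alpha_{n-1}}+\omega^\beta\cdot x$ ($x$ copies of $\omega^\beta$). If $\alpha_n$ is a nonzero non-successor then $\alpha[x]=\omega^{\alpha_0}+\dots+\omega^{\alpha_{n-1}}+\omega^{\alpha_n[x]}$. $\alpha[x_0]\cdots[x_R]$ denotes iterated application. *)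

(* Defs.v *)
From Stdlib Require Import Arith List.
Import ListNotations.

(* [Plus a b] denotes  omega^a + b ; a notation
   omega^{a_0} + ... + omega^{a_n} is  Plus a_0 (Plus a_1 ... (Plus a_n Zero)). *)
Inductive ON : Type :=
| Zero : ON
| Plus : ON -> ON -> ON.

Inductive olt : ON -> ON -> Prop :=
| olt_zero a b : olt Zero (Plus a b)
| olt_exp a b c d : olt a c -> olt (Plus a b) (Plus c d)
| olt_tail a b d : olt b d -> olt (Plus a b) (Plus a d).

Fixpoint is_succ (a : ON) : bool :=
  match a with
  | Zero => false
  | Plus e Zero => match e with Zero => true | _ => false end
  | Plus _ b => is_succ b
  end.

Definition omega_mul (b : ON) (x : nat) : ON := Nat.iter x (Plus b) Zero.

Fixpoint fs (a : ON) (x : nat) : ON :=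
  match a with
  | Zero => Zero
  | Plus e b =>
      match b with
      | Zero =>
          match e with
          | Zero => Zero
          | Plus _ _ =>
              if is_succ e then omega_mul (fs e x) x      (* e = beta+1; e[x] = beta *)
              else Plus (fs e x) Zero
          end
      | Plus _ _ => Plus e (fs b x)
      end
  end.

Definition fs_iter (a : ON) (xs : list nat) : ON :=
  fold_left fs xs a.

Definition one : ON := Plus Zero Zero.
Definition three : ON := Plus Zero (Plus Zero (Plus Zero Zero)).
Definition omega3 : ON := Plus three Zero.

Definition E (x : nat) : nat := 2 ^ (2 ^ (2 ^ x)).

(* Main.v *)
Require Import Defs.
From Stdlib Require Import Arith List Lia.

Definition two : ON := Plus Zero (Plus Zero Zero).
Definition rep (a b c : nat) : ON :=
  Nat.iter a (Plus two) (Nat.iter b (Plus one) (Nat.iter c (Plus Zero) Zero)).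

Lemma L1 e t x : t <> Zero -> fs (Plus e t) x = Plus e (fs t x).
Proof. destruct t; [congruence | reflexivity]. Qed.

Lemma iter_nz k e t : t <> Zero -> Nat.iter k (Plus e) t <> Zero.
Proof. destruct k; simpl; [auto | discriminate]. Qed.

Lemma L2 k e t x : t <> Zero ->
  fs (Nat.iter k (Plus e) t) x = Nat.iter k (Plus e) (fs t x).
Proof.
  intro H; induction k; [reflexivity|].
  change (fs (Plus e (Nat.iter k (Plus e) t)) x = Plus e (Nat.iter k (Plus e) (fs t x))).
  rewrite L1 by (apply iter_nz; auto). now rewrite IHk.
Qed.

Lemma L3 c x : fs (Nat.iter (S c) (Plus Zero) Zero) x = Nat.iter c (Plus Zero) Zero.
Proof.
  induction c; [reflexivity|].
  change (fs (Plus Zero (Nat.iter (S c) (Plus Zero) Zero)) x = Plus Zero (Nat.iter c (Plus Zero) Zero)).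
  rewrite L1 by discriminate. now rewrite IHc.
Qed.

Lemma L4 b x : fs (Nat.iter (S b) (Plus one) Zero) x
  = Nat.iter b (Plus one) (Nat.iter x (Plus Zero) Zero).
Proof.
  induction b; [reflexivity|].
  change (fs (Plus one (Nat.iter (S b) (Plus one) Zero)) x = Plus one (Nat.iter b (Plus one) (Nat.iter x (Plus Zero) Zero))).
  rewrite L1 by discriminate. now rewrite IHb.
Qed.

Lemma L5 a x : fs (Nat.iter (S a) (Plus two) Zero) x
  = Nat.iter a (Plus two) (Nat.iter x (Plus one) Zero).
Proof.
  induction a; [reflexivity|].
  change (fs (Plus two (Nat.iter (S a) (Plus two) Zero)) x = Plus two (Nat.iter a (Plus two) (Nat.iter x (Plus one) Zero))).
  rewrite L1 by discriminate. now rewrite IHa.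
Qed.

Lemma stepC a b c x : fs (rep a b (S c)) x = rep a b c.
Proof.
  unfold rep. rewrite L2 by (apply iter_nz; discriminate).
  rewrite L2 by discriminate. now rewrite L3.
Qed.

Lemma stepB a b x : fs (rep a (S b) 0) x = rep a b x.
Proof.
  unfold rep. rewrite L2 by discriminate. now rewrite L4.
Qed.

Lemma stepA a x : fs (rep (S a) 0 0) x = rep a x 0.
Proof. unfold rep. change (fs (Nat.iter (S a) (Plus two) Zero) x = Nat.iter a (Plus two) (Nat.iter x (Plus one) Zero)). now rewrite L5. Qed.

Lemma stepO x : fs omega3 x = rep x 0 0.
Proof. reflexivity. Qed.

Definition F (y : nat -> nat) n j o := fold_left fs (map y (seq n j)) o.

Lemma F_add y n j1 j2 o : F y n (j1 + j2) o = F y (n + j1) j2 (F y n j1 o).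
Proof. unfold F. now rewrite seq_app, map_app, fold_left_app. Qed.

Lemma F_one y n o : F y n 1 o = fs o (y n).
Proof. reflexivity. Qed.

Lemma F_zero y n j : F y n j Zero = Zero.
Proof. revert n; induction j; intro n; [reflexivity|]. apply (IHj (S n)). Qed.

Lemma C_lem y a b c n : F y n c (rep a b c) = rep a b 0.
Proof.
  revert n; induction c; intro n; [reflexivity|].
  unfold F; simpl. rewrite stepC. apply IHc.
Qed.


Lemma Bstep y d (Hy : forall i, i + d <= y i) a r n :
  exists j, F y n j (rep a (S r) 0) = rep a r 0 /\ 2*(n+1+d) <= n+j+1+d.
Proof.
  exists (1 + y n). rewrite F_add, F_one, stepB, C_lem. split; [reflexivity|].
  specialize (Hy n). lia.
Qed.

Lemma Blem y d (Hy : forall i, i + d <= y i) : forall b r a n,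
  exists j, F y n j (rep a (b + r) 0) = rep a r 0 /\ 2^b*(n+1+d) <= n+j+1+d.
Proof.
  induction b; intros r a n.
  - exists 0. simpl. split; [reflexivity|lia].
  - destruct (IHb (S r) a n) as [j1 [E1 H1]].
    destruct (Bstep y d Hy a r (n+j1)) as [j2 [E2 H2]].
    exists (j1 + j2). rewrite F_add. replace (S b + r) with (b + S r) by lia.
    rewrite E1, E2. split; [reflexivity|].
    rewrite Nat.pow_succ_r'. nia.
Qed.

Lemma Astep y d (Hy : forall i, i + d <= y i) a n :
  exists j, F y n j (rep (S a) 0 0) = rep a 0 0 /\ 2^(n+1+d) <= n+j+1+d.
Proof.
  destruct (Blem y d Hy (y n) 0 a (n+1)) as [j2 [E2 H2]].
  exists (1 + j2). rewrite F_add, F_one, stepA.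
  rewrite Nat.add_0_r in E2. rewrite E2. split; [reflexivity|].
  assert (2^(n+d) <= 2^(y n)) by (apply Nat.pow_le_mono_r; [lia| apply Hy]).
  replace (n+1+d) with (S (n+d)) by lia. rewrite Nat.pow_succ_r'. nia.
Qed.

Definition g (u : nat) := 2 ^ u.

Lemma Alem y d (Hy : forall i, i + d <= y i) : forall a r n,
  exists j, F y n j (rep (a + r) 0 0) = rep r 0 0 /\ Nat.iter a g (n+1+d) <= n+j+1+d.
Proof.
  induction a; intros r n.
  - exists 0. simpl. split; [reflexivity|lia].
  - destruct (IHa (S r) n) as [j1 [E1 H1]].
    destruct (Astep y d Hy r (n+j1)) as [j2 [E2 H2]].
    exists (j1 + j2). rewrite F_add. replace (S a + r) with (a + S r) by lia.
    rewrite E1, E2. split; [reflexivity|].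
    simpl Nat.iter. unfold g at 1.
    assert (2 ^ Nat.iter a g (n + 1 + d) <= 2^(n+j1+1+d))
      by (apply Nat.pow_le_mono_r; lia).
    lia.
Qed.

Lemma iter_ge k u : u <= Nat.iter k g u.
Proof.
  induction k; simpl; [lia|]. unfold g at 1.
  pose proof (Nat.pow_gt_lin_r 2 (Nat.iter k g u)). lia.
Qed.

Theorem lemma2p8 :
  forall x : nat -> nat,
    3 <= x 0 ->
    (forall i, i < E (x 0) + 8 -> x i < x (S i)) ->
    olt Zero (fs_iter omega3 (map x (seq 0 (E (x 0) + 9)))).
Proof.
  intros x H3 Hinc.
  set (d := x 0) in *. set (N := E d + 9).
  set (y := fun i => if i <? N then x i else i + d).
  assert (Hx : forall i, i < N -> i + d <= x i).
  { induction i; intro Hi; [unfold d; lia|].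
    assert (x i < x (S i)) by (apply Hinc; unfold N in Hi; lia). 
    specialize (IHi ltac:(lia)). lia. }
  assert (Hy : forall i, i + d <= y i).
  { intro i. unfold y. destruct (Nat.ltb_spec i N); [apply Hx; auto | lia]. }
  assert (Hmap : map x (seq 0 N) = map y (seq 0 N)).
  { apply map_ext_in. intros a Ha. apply in_seq in Ha. unfold y.
    destruct (Nat.ltb_spec a N); [reflexivity|lia]. }
  unfold fs_iter. fold N. rewrite Hmap. change (olt Zero (F y 0 N omega3)).
  assert (E0 : F y 0 1 omega3 = rep d 0 0).
  { rewrite F_one, stepO. unfold y. destruct (Nat.ltb_spec 0 N); [reflexivity|lia]. }
  destruct (Alem y d Hy (d-1) 1 1) as [j1 [E1 H1]].
  replace (d - 1 + 1) with d in E1 by lia.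
  set (n1 := 1 + j1) in *.
  assert (Ey : F y n1 1 (rep 1 0 0) = rep 0 (y n1) 0) by (rewrite F_one; apply stepA).
  destruct (Blem y d Hy (y n1 - 1) 1 0 (n1 + 1)) as [j2 [E2 H2]].
  pose proof (Hy n1) as Hyn1.
  replace (y n1 - 1 + 1) with (y n1) in E2 by lia.
  assert (Hpath : F y 0 (1 + j1 + 1 + j2) omega3 = rep 0 1 0).
  { rewrite !F_add, E0. change (0 + 1) with 1. rewrite E1.
    change (0 + (1 + j1)) with n1. rewrite Ey.
    replace (0 + (1 + j1 + 1)) with (n1 + 1) by (unfold n1; lia). exact E2. }
  set (K := 2 ^ 2 ^ d).
  assert (HE : E d = 2 ^ K) by reflexivity.
  set (M := Nat.iter (d-1) g (1 + 1 + d)) in *.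
  assert (HM : 2 ^ (2 ^ (d+2)) <= M).
  { unfold M. replace (d - 1) with (S (S (d - 3))) by lia.
    pose proof (iter_ge (d-3) (1+1+d)).
    simpl. unfold g at 1 2.
    apply Nat.pow_le_mono_r; [lia|]. apply Nat.pow_le_mono_r; [lia|]. simpl in H. lia. }
  assert (HK1 : K + 2 <= 2 ^ (2 ^ (d+2))).
  { assert (2 ^ (2^d + 1) <= 2 ^ (2 ^ (d+2))).
    { apply Nat.pow_le_mono_r; [lia|]. rewrite Nat.pow_add_r.
      assert (1 <= 2 ^ d) by (apply Nat.pow_le_mono_r with (b:=0) (c:=d); lia ).
      simpl (2^2). lia. }
    rewrite Nat.pow_add_r in H. unfold K.
    assert (2 <= 2 ^ 2 ^ d).
    { change 2 with (2^1) at 1. apply Nat.pow_le_mono_r; [lia|].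
      apply (Nat.pow_le_mono_r 2 0 d); lia. }
    simpl (2^1) in H. lia. }
  assert (HKd : d + 10 <= 2 ^ K).
  { assert (Hd8 : 2^3 <= 2^d) by (apply Nat.pow_le_mono_r; lia).
    assert (Hdd : d < 2^d) by (apply Nat.pow_gt_lin_r; lia).
    assert (HK8 : 2^(2^3) <= K) by (apply Nat.pow_le_mono_r; lia).
    assert (HKd : 2^d < K) by (apply Nat.pow_gt_lin_r; lia).
    simpl in HK8, Hd8.
    assert (K - 1 < 2 ^ (K - 1)) by (apply Nat.pow_gt_lin_r; lia).
    replace (2^K) with (2 * 2^(K-1)) by (rewrite <- Nat.pow_succ_r'; f_equal; lia). lia. }
  assert (HB2 : 2 ^ (n1 + d) <= n1 + 1 + j2 + 1 + d).
  { assert (2 ^ (n1 + d - 1) <= 2 ^ (y n1 - 1)) by (apply Nat.pow_le_mono_r; lia).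
    replace (n1 + d) with (S (n1 + d - 1)) by lia. rewrite Nat.pow_succ_r'. nia. }
  assert (HKM : 2 ^ (K + 1) <= 2 ^ (n1 + d)) by (apply Nat.pow_le_mono_r; unfold n1; lia).
  rewrite Nat.pow_add_r in HKM. simpl (2^1) in HKM.
  assert (HJ : N <= 1 + j1 + 1 + j2) by (unfold N; unfold n1 in *; lia).
  replace (1 + j1 + 1 + j2) with (N + (1 + j1 + 1 + j2 - N)) in Hpath by lia.
  rewrite F_add in Hpath.
  destruct (F y 0 N omega3) eqn:HF.
  - rewrite F_zero in Hpath. unfold rep in Hpath. discriminate.
  - constructor.
Qed.
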